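(* Let $V$ be an abelian subgroup of a finite group $G$, and let $g\in G$ be an element normalizing $V$ whose order is coprime to $|V|$. Then $$[V,g]=\mathscr E_{V\langle g\rangle}(g)=\mathscr R_{V\langle g\rangle}(g).$$
   Context: Commutators: $a^b=b^{-1}ab$, $[a,b]=a^{-1}b^{-1}ab$, and $[a,{}_nb]=[\dots[[a,b],b],\dots,b]$ with $b$ repeated $n$ times; $[V,g]$ is the subgroup generated by all $[v,g]$, $v\in V$. For a finite group $H$ and $g\in H$, the right Engel sink $\mathscr R_H(g)$ is the smallest set $\mathscr R\subseteq H$ such that for every $x\in H$ there is $r(x)\ge1$ with $[g,{}_nx]\in\mathscr R$ for all $n\ge r(x)$; the left Engel sink $\mathscr E_H(g)$ is the smallest set $\mathscr E\subseteq H$ such that for every $x\in H$ there is $l(x)\ge1$ with $[x,{}_ng]\in\mathscr E$ for all $n\ge l(x)$ (intersections of such sets are again such sets). *)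

(* Defs.v *)
From mathcomp Require Import all_boot all_fingroup all_solvable.
Set Implicit Arguments. Unset Strict Implicit. Unset Printing Implicit Defensive.
Local Open Scope group_scope.

Definition commn (gT : finGroupType) (a b : gT) (n : nat) : gT :=
  iter n (fun c => [~ c, b]) a.

Definition left_sink_set (gT : finGroupType) (H : {set gT}) (g : gT)
    (E : {set gT}) : Prop :=
  E \subset H /\
  forall x, x \in H -> exists l, (1 <= l)%N /\
    forall n, (l <= n)%N -> commn x g n \in E.

Definition right_sink_set (gT : finGroupType) (H : {set gT}) (g : gT)
    (R : {set gT}) : Prop :=
  R \subset H /\
  forall x, x \in H -> exists r, (1 <= r)%N /\
    forall n, (r <= n)%N -> commn g x n \in R.

Definition is_left_Engel_sink (gT : finGroupType) (H : {set gT}) (g : gT)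
    (E : {set gT}) : Prop :=
  left_sink_set H g E /\ forall E', left_sink_set H g E' -> E \subset E'.

Definition is_right_Engel_sink (gT : finGroupType) (H : {set gT}) (g : gT)
    (R : {set gT}) : Prop :=
  right_sink_set H g R /\ forall R', right_sink_set H g R' -> R \subset R'.

(* Main.v *)
Require Import Defs.
From mathcomp Require Import all_boot all_fingroup all_solvable.
Local Open Scope group_scope.

Lemma perm_props (T : finType) (S : {pred T}) (f : T -> T) :
  {homo f : x / x \in S} -> {in S &, injective f} ->
  forall x, x \in S -> (exists2 p, (0 < p)%N & iter p f x = x) /\
                       (exists2 y, y \in S & f y = x).
Proof.
move=> fS injf x xS; split.
  by exists (fingraph.order f x); [exact: fingraph.order_gt0 | exact: (iter_order_in fS injf xS)].
by exists (finv f x); [exact: (finv_in fS xS) | exact: (f_finv_in fS injf xS)].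
Qed.

Lemma iter_period (T : Type) (f : T -> T) p x :
  iter p f x = x -> forall k, iter (k * p) f x = x.
Proof.
by move=> hp; elim=> [//|k IH]; rewrite mulSn iterD IH hp.
Qed.

Theorem lemma3p2 (gT : finGroupType) (G V : {group gT}) (g : gT) :
  V \subset G -> abelian V -> g \in G -> g \in 'N(V) ->
  coprime #[g] #|V| ->
  is_left_Engel_sink (V <*> <[g]>) g [~: V, [set g]] /\
  is_right_Engel_sink (V <*> <[g]>) g [~: V, [set g]].
Proof.
move=> _ abV _ nVg cop.
set U := [~: V, [set g]].
set H := V <*> <[g]>.
have sUVg : U \subset [~: V, <[g]>].
  by apply: commgSS => //; rewrite sub1set cycle_id.
have sUV : U \subset V.
  by apply: subset_trans sUVg _; rewrite commg_subl cycle_subG.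
have nUg : g \in 'N(U).
  rewrite inE /U -genJ gen_subG; apply/subsetP=> _ /imsetP[_ /imset2P[y z Vy zg ->] ->].
  move: zg; rewrite inE => /eqP ->; rewrite conjRg [g ^ g]conjgE mulKg.
  by apply: mem_commg; rewrite ?set11 ?memJ_norm.
have sVH : V \subset H := joing_subl _ _.
have sUH : U \subset H := subset_trans sUV sVH.
have ncg : <[g]> \subset 'N(U) by rewrite cycle_subG.
have nUH : H \subset 'N(U).
  by rewrite join_subG ncg sub_abelian_norm.
have defH : H = V * <[g]> by rewrite /H norm_joinEr // cycle_subG.
have commUN : forall w y, w \in U -> y \in 'N(U) -> [~ w, y] \in U.
  by move=> w y wU yN; rewrite commgEl groupM ?groupV ?memJ_norm.
have commHg : forall x, x \in H -> [~ x, g] \in U.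
  move=> x; rewrite defH => /mulsgP[v k vV kg ->].
  rewrite commMgJ.
  have -> : [~ k, g] = 1.
    apply/eqP/commgP; case/cycleP: kg => i ->.
    by apply: commute_sym; apply: commuteX.
  rewrite mulg1 memJ_norm; first by apply: mem_commg; rewrite ?set11.
  by apply: (subsetP ncg).
pose phi x := if x \in U then [~ x, g] else x.
have phiU : {homo phi : x / x \in U}.
  by move=> x xU; rewrite /phi xU commUN.
have TI : 'C_[~: V, <[g]>](<[g]>) = 1.
  apply: coprime_abel_cent_TI => //; first by rewrite cycle_subG.
  by rewrite coprime_sym.
have phiinj : {in U &, injective phi}.
  move=> u u' uU u'U; rewrite /phi uU u'U !commgEl => e.
  have e2 : u ^ g = u * (u'^-1 * u' ^ g) by rewrite -e mulKVg.
  have zC : u * u'^-1 \in 'C_[~: V, <[g]>](<[g]>).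
    rewrite inE; apply/andP; split.
      by apply: (subsetP sUVg); rewrite /U groupM ?groupV.
    rewrite cent_cycle; apply/cent1P.
    by apply/commgP; rewrite commgEl conjMg conjVg e2 -mulgA mulgK mulVg.
  move: zC; rewrite TI inE => /eqP /(congr1 (mulg^~ u')).
  by rewrite mulgKV mul1g.
have Pu := @perm_props _ (mem U) phi phiU phiinj.
have iterU : forall n w, w \in U -> iter n phi w \in U.
  by move=> n w wU; elim: n => //= n IH; apply: phiU.
have phiE : forall w, w \in U -> phi w = [~ w, g] by move=> w; rewrite /phi => ->.
have gH : g \in H by rewrite (subsetP (joing_subr _ _)) // cycle_id.
split.
- split.
  + split; first exact: sUH.
    move=> x xH; exists 1%N; split => //.
    have : forall n, commn x g n.+1 \in U.
      elim=> [|n IH]; first exact: commHg.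
      exact: (commHg _ (subsetP sUH _ IH)).
    by move=> h [|n] // _; exact: h.
  + move=> E' [_ hE]; apply/subsetP => u uU.
    have [l [_ hl]] := hE u (subsetP sUH _ uU).
    have [[p p0 hp] _] := Pu u uU.
    have cE : forall n, commn u g n = iter n phi u.
      elim=> [//|n IH]; rewrite /commn /= -/(commn u g n) IH phiE ?iterU //.
    by have := hl (l * p)%N (leq_pmulr _ p0); rewrite cE iter_period.
- split.
  + split; first exact: sUH.
    move=> x xH; exists 1%N; split=> //.
    have xN := subsetP nUH _ xH.
    have : forall n, commn g x n.+1 \in U.
      elim=> [|n IH]; first by rewrite /commn /= -invgR /U groupV commHg.
      exact: commUN IH xN.
    by move=> h [|n] // _; exact: h.
  + move=> R' [_ hR]; apply/subsetP => u uU.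
    have uU' : (u ^ g^-1)^-1 \in U by rewrite /U groupV memJ_norm ?groupV.
    have [_ [v vU hv]] := Pu _ uU'.
    rewrite phiE // in hv.
    have vV := subsetP sUV _ vU.
    have xH : v * g \in H by rewrite groupM // (subsetP sVH).
    have [r [_ hr]] := hR _ xH.
    have [[p p0 hp] _] := Pu u uU.
    have cE : forall n, commn g (v*g) n.+1 = iter n phi u.
      elim=> [|n IH].
        by rewrite /commn /= commgMJ commgg mul1g -invgR hv invgK conjgKV.
      have wU := iterU n u uU.
      rewrite (_ : commn g (v*g) n.+2 = [~ commn g (v*g) n.+1, v*g]) // IH iterS phiE // commgMJ.
      have -> : [~ iter n phi u, v] = 1.
        by apply/eqP/commgP; apply: (centsP abV); rewrite // (subsetP sUV).
      by rewrite conj1g mulg1.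
    by have := hr (r * p).+1 (leqW (leq_pmulr _ p0)); rewrite cE iter_period.
Qed.
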